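(* Let $\Omega$ be a triangulation whose edges are labeled as terminal-, internal- and frontier-edges, and let $R$ be a terminal-edge region of $\Omega$. Apply the polygon construction (traversal) procedure starting from a seed triangle of $R$. During this procedure, each triangle of $R$ is visited at most $3$ times.
   Context: Let $\Omega$ be a triangulation in which every triangle has a designated unique longest edge (ties between equal-length edges are broken arbitrarily but consistently). Edges are labeled as follows. An edge shared by two triangles is: - a terminal-edge if it is the longest edge of both triangles; - a frontier-edge if it is the longest edge of neither triangle; - an internal-edge otherwise. Edges belonging to a single triangle are boundary edges and are treated as frontier-edges. For a triangle $t_0$, $\mathrm{Lepp}(t_0)$ is the sequence $t_0,t_1,\dots$ in which each $t_i$ is the neighbor of $t_{i-1}$ across the longest edge of $t_{i-1}$, ending at a terminal (or boundary) edge. A terminal-edge region is the union of all triangles whose Lepp ends at the same terminal-edge. It is bounded by frontier-edges, and its triangles are connected to each other across internal-edges (and terminal-edges). The polygon construction procedure builds the boundary polygon of $R$ as a counter-clockwise list of frontier-edge vertices. It starts from a seed triangle $t$ of $R$: - If $t$ has 3 frontier-edges, $t$ itself is the polygon. - Otherwise the frontier-edges of $t$ (if any) are appended in counter-clockwise order. The initial vertex $v_{init}$ and the current endpoint $v_{end}$ are recorded (if $t$ has no frontier-edge, both are set to an arbitrary vertex of $t$). The procedure then repeatedly moves from the current triangle to a neighboring triangle $t'$ of $R$, always across a non-frontier edge (an internal-edge), choosing the neighbor that contains $v_{end}$: - If $t'$ has one frontier-edge incident to $v_{end}$, that edge is appended, $v_{end}$ is updated to its other endpoint, and the procedure moves to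 the not-previously-visited internal-edge neighbor containing $v_{end}$. - If $t'$ has two frontier-edges, both are appended, $v_{end}$ is updated, and the procedure returns to the previously visited triangle. - If $t'$ has no frontier-edge, the procedure moves to the internal-edge neighbor, in counter-clockwise order, that contains $v_{end}$. The procedure stops when $v_{end}=v_{init}$ and the walk returns to the starting triangle. Each move into a triangle counts as one visit of that triangle. *)

(* Defs.v *)
From mathcomp Require Import all_boot all_order all_algebra.
Set Implicit Arguments. Unset Strict Implicit. Unset Printing Implicit Defensive.
Import Order.TTheory GRing.Theory Num.Theory.

Local Open Scope ring_scope.

(* twice the signed area of (p,q,r); > 0 iff p,q,r is counter-clockwise *)
Definition orient (R : numDomainType) (p q r : R * R) : R :=
  (q.1 - p.1) * (r.2 - p.2) - (q.2 - p.2) * (r.1 - p.1).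

Definition len2 (R : numDomainType) (p q : R * R) : R :=
  (p.1 - q.1) ^+ 2 + (p.2 - q.2) ^+ 2.

Local Close Scope ring_scope.

(* ---------- triangles: tv t i (i : 'I_3) are the vertices of t in ccw order;
   edge i of t goes from tv t i to tv t (nxt i) ---------- *)
Definition nxt (i : 'I_3) : 'I_3 := ordS i.
Definition prv (i : 'I_3) : 'I_3 := ord_pred i.

Definition ccw_tri (R : numDomainType) (V T : Type) (pos : V -> R * R)
  (tv : T -> 'I_3 -> V) (t : T) : bool :=
  (0 < orient (pos (tv t ord0)) (pos (tv t (nxt ord0))) (pos (tv t (nxt (nxt ord0)))))%R.

Definition inside_tri (R : numDomainType) (V T : Type) (pos : V -> R * R)
  (tv : T -> 'I_3 -> V) (t : T) (q : R * R) : bool :=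
  [&& (0 < orient (pos (tv t ord0)) (pos (tv t (nxt ord0))) q)%R,
      (0 < orient (pos (tv t (nxt ord0))) (pos (tv t (nxt (nxt ord0)))) q)%R &
      (0 < orient (pos (tv t (nxt (nxt ord0)))) (pos (tv t ord0)) q)%R].

Definition same_edge (V : eqType) (a b c d : V) : bool :=
  ((a == c) && (b == d)) || ((a == d) && (b == c)).

Section Labels.
Context {V : eqType} {T : finType} (tv : T -> 'I_3 -> V) (lg : T -> 'I_3).
(* lg t = index of the designated longest edge of t *)

Definition has_edge (t : T) (u w : V) : bool :=
  [exists i : 'I_3, same_edge (tv t i) (tv t (nxt i)) u w].

Definition is_longest (t : T) (u w : V) : bool :=
  same_edge (tv t (lg t)) (tv t (nxt (lg t))) u w.

Definition boundary (t : T) (i : 'I_3) : bool :=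
  [forall t' : T, (t' != t) ==> ~~ has_edge t' (tv t i) (tv t (nxt i))].

Definition frontier (t : T) (i : 'I_3) : bool :=
  boundary t i ||
  [exists t' : T, [&& t' != t, has_edge t' (tv t i) (tv t (nxt i)),
                      lg t != i & ~~ is_longest t' (tv t i) (tv t (nxt i))]].

Definition terminal (t : T) (i : 'I_3) : bool :=
  [exists t' : T, [&& t' != t, has_edge t' (tv t i) (tv t (nxt i)),
                      lg t == i & is_longest t' (tv t i) (tv t (nxt i))]].

(* lepp_ends t u w : Lepp(t) ends at the edge {u,w} (a terminal edge or a
   boundary longest edge) *)
Inductive lepp_ends : T -> V -> V -> Prop :=
| lepp_stop t u w :
    same_edge (tv t (lg t)) (tv t (nxt (lg t))) u w ->
    boundary t (lg t) || terminal t (lg t) ->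
    lepp_ends t u w
| lepp_next t t' u w :
    ~~ boundary t (lg t) -> ~~ terminal t (lg t) ->
    t' != t -> has_edge t' (tv t (lg t)) (tv t (nxt (lg t))) ->
    lepp_ends t' u w -> lepp_ends t u w.

(* ---------- polygon construction walk ----------
   State (t, i): current triangle t, current endpoint v_end = tv t i.
   One step: if the ccw edge of t leaving v_end is a frontier-edge it is
   appended and v_end advances along it; otherwise the walk moves across
   that (non-frontier) edge into the neighbouring triangle, keeping v_end. *)
Definition step (s : T * 'I_3) : T * 'I_3 :=
  let: (t, i) := s in
  if frontier t i then (t, nxt i) else
  match [pick t' | (t' != t) && has_edge t' (tv t i) (tv t (nxt i))] with
  | Some t' => (t', odflt i [pick j | tv t' j == tv t i])
  | None => (t, nxt i)
  end.

Definition crosses (s : T * 'I_3) : bool := ~~ frontier s.1 s.2.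

Definition walk (s0 : T * 'I_3) (k : nat) : T * 'I_3 := iter k step s0.

Definition visits (s0 : T * 'I_3) (t : T) (k : nat) : nat :=
  \sum_(0 <= j < k) (crosses (walk s0 j) && ((walk s0 j.+1).1 == t)).

End Labels.

(* Main.v *)
Require Import Defs.
From mathcomp Require Import all_boot all_order all_algebra.
From mathcomp Require Import ring.

Set Implicit Arguments. Unset Strict Implicit. Unset Printing Implicit Defensive.

Lemma ord3_cases (i : 'I_3) : i = ord0 \/ i = nxt ord0 \/ i = nxt (nxt ord0).
Proof.
case: i => [[|[|[|m]]] Hi].
- by left; apply: val_inj.
- by right; left; apply: val_inj.
- by right; right; apply: val_inj.
- by [].
Qed.

Lemma nxt_inj : injective nxt.
Proof. by move=> i j; case: (ord3_cases i) => [->|[->|->]]; case: (ord3_cases j) => [->|[->|->]]. Qed.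

Lemma nxt_nxt_neq (i : 'I_3) : nxt (nxt i) != i.
Proof. by case: (ord3_cases i) => [->|[->|->]]. Qed.

Import Order.TTheory GRing.Theory Num.Theory.
Local Open Scope ring_scope.
Lemma tv_inj_ccw (R : realFieldType) (V T : finType) (pos : V -> R * R)
  (tv : T -> 'I_3 -> V) (Hccw : forall t, ccw_tri pos tv t) (t : T) :
  injective (tv t).
Proof.
have := Hccw t; rewrite /ccw_tri.
set a := tv t ord0; set b := tv t (nxt ord0); set c := tv t (nxt (nxt ord0)).
move=> H.
have o1 : forall p r : R * R, orient p p r = 0 by move=> p r; rewrite /orient; ring.
have o2 : forall p q : R * R, orient p q q = 0 by move=> p q; rewrite /orient; ring.
have o3 : forall p q : R * R, orient p q p = 0 by move=> p q; rewrite /orient; ring.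
have ab : a != b by apply/eqP=> E; move: H; rewrite E o1 ltxx.
have bc : b != c by apply/eqP=> E; move: H; rewrite E o2 ltxx.
have ac : a != c by apply/eqP=> E; move: H; rewrite E o3 ltxx.
move=> i j.
case: (ord3_cases i) => [->|[->|->]]; case: (ord3_cases j) => [->|[->|->]] //;
  rewrite -/a -/b -/c => E; move: ab bc ac; rewrite E eqxx //= ?andbF.
Qed.

Local Close Scope ring_scope.
Section Walk.

Lemma nb_rev (V : eqType) (T : finType) (tv : T -> 'I_3 -> V)
  (Hdir : forall t t' i i', tv t i = tv t' i' ->
            tv t (nxt i) = tv t' (nxt i') -> t = t')
  t t1 i : t1 != t -> has_edge tv t1 (tv t i) (tv t (nxt i)) ->
  exists k, tv t1 k = tv t (nxt i) /\ tv t1 (nxt k) = tv t i.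
Proof.
move=> ne /existsP[k]; rewrite /same_edge => /orP[/andP[/eqP e1 /eqP e2]|/andP[/eqP e1 /eqP e2]].
  by move: ne; rewrite (Hdir _ _ _ _ e1 e2) eqxx.
by exists k.
Qed.

Lemma nb_unique (V : eqType) (T : finType) (tv : T -> 'I_3 -> V)
  (Hdir : forall t t' i i', tv t i = tv t' i' ->
            tv t (nxt i) = tv t' (nxt i') -> t = t')
  t t1 t2 i : t1 != t -> t2 != t ->
  has_edge tv t1 (tv t i) (tv t (nxt i)) ->
  has_edge tv t2 (tv t i) (tv t (nxt i)) -> t1 = t2.
Proof.
move=> n1 n2 h1 h2.
have [k1 [a1 b1]] := nb_rev Hdir n1 h1.
have [k2 [a2 b2]] := nb_rev Hdir n2 h2.
by apply: (Hdir _ _ k1 k2); rewrite ?a1 ?a2 ?b1 ?b2.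
Qed.

Lemma crossing (V : eqType) (T : finType) (tv : T -> 'I_3 -> V) (lg : T -> 'I_3)
  (Hinj : forall t, injective (tv t))
  (Hdir : forall t t' i i', tv t i = tv t' i' ->
            tv t (nxt i) = tv t' (nxt i') -> t = t')
  t i : ~~ frontier tv lg t i ->
  exists t' k, [/\ step tv lg (t, i) = (t', nxt k), t' != t,
     tv t' k = tv t (nxt i) & tv t' (nxt k) = tv t i].
Proof.
move=> nf; have := nf; rewrite /frontier negb_or => /andP[nb _].
rewrite /step (negbTE nf).
case: pickP => [t1 /andP[n1 h1]|H].
  have [k [a b]] := nb_rev Hdir n1 h1.
  case: pickP => [j /eqP Hj|H].
    exists t1, k; split => //.
    by congr pair; apply: (Hinj t1); rewrite Hj b.
  by move: (H (nxt k)); rewrite b eqxx.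
move: nb; rewrite /boundary => /forallPn[t1]; rewrite negb_imply negbK => /andP[n1 h1].
by move: (H t1); rewrite n1 h1.
Qed.

Lemma frontier_nb (V : eqType) (T : finType) (tv : T -> 'I_3 -> V) (lg : T -> 'I_3)
  (Hinj : forall t, injective (tv t))
  (Hdir : forall t t' i i', tv t i = tv t' i' ->
            tv t (nxt i) = tv t' (nxt i') -> t = t')
  t t2 i j : frontier tv lg t i -> t2 != t ->
  tv t2 j = tv t (nxt i) -> tv t2 (nxt j) = tv t i -> frontier tv lg t2 j.
Proof.
move=> F n2 a b.
have h2 : has_edge tv t2 (tv t i) (tv t (nxt i)).
  by apply/existsP; exists j; rewrite /same_edge a b !eqxx orbT.
move: F; rewrite /frontier => /orP[/forallP/(_ t2)|].
  by rewrite n2 h2.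
move=> /existsP[t1 /and4P[n1 h1 lgi nl]].
have E := nb_unique Hdir n1 n2 h1 h2; subst t1.
apply/orP; right; apply/existsP; exists t.
rewrite eq_sym n2 /=.
apply/and3P; split.
- by apply/existsP; exists i; rewrite /same_edge a b !eqxx orbT.
- apply/eqP=> L; move: nl; rewrite /is_longest L a b /same_edge !eqxx orbT //.
- rewrite /is_longest a b /same_edge; apply/negP => /orP[/andP[/eqP e1 /eqP e2]|/andP[/eqP e1 /eqP e2]].
  + have E1 := Hinj _ _ _ e1; have E2 := Hinj _ _ _ e2.
    by move: (nxt_nxt_neq i); rewrite -E1 E2 eqxx.
  + by move: lgi; rewrite (Hinj _ _ _ e1) eqxx.
Qed.

Lemma step_inj (V : eqType) (T : finType) (tv : T -> 'I_3 -> V) (lg : T -> 'I_3)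
  (Hinj : forall t, injective (tv t))
  (Hdir : forall t t' i i', tv t i = tv t' i' ->
            tv t (nxt i) = tv t' (nxt i') -> t = t') :
  injective (step tv lg).
Proof.
have frstep : forall t i, frontier tv lg t i -> step tv lg (t, i) = (t, nxt i).
  by move=> t i F; rewrite /step F.
move=> [t i] [t2 i2].
case F1: (frontier tv lg t i); case F2: (frontier tv lg t2 i2).
- by rewrite !frstep // => /pair_equal_spec[-> E]; congr pair; exact: nxt_inj E.
- have [t' [k [s n a b]]] := crossing Hinj Hdir (negbT F2).
  rewrite frstep // s => /pair_equal_spec[E1 E2]; subst t'.
  move: (nxt_inj E2) => E; subst k.
  by move: F2; rewrite (frontier_nb Hinj Hdir F1 _ (esym b) (esym a)) // eq_sym.
- have [t' [k [s n a b]]] := crossing Hinj Hdir (negbT F1).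
  rewrite s frstep // => /pair_equal_spec[E1 E2]; subst t'.
  move: (nxt_inj E2) => E; subst k.
  by move: F1; rewrite (frontier_nb Hinj Hdir F2 _ (esym b) (esym a)) // eq_sym.
- have [t' [k [s n a b]]] := crossing Hinj Hdir (negbT F1).
  have [t2' [k2 [s2 n2 a2 b2]]] := crossing Hinj Hdir (negbT F2).
  rewrite s s2 => /pair_equal_spec[E1 E2]; subst t2'; move: (nxt_inj E2) => E; subst k2.
  have Et : t = t2 by apply: (Hdir _ _ i i2); rewrite -?a -?b ?a2 ?b2.
  subst t2; congr pair; apply: (Hinj t); by rewrite -b b2.
Qed.

End Walk.

Theorem lemma1 (R : realFieldType) (V T : finType) (pos : V -> R * R)
  (tv : T -> 'I_3 -> V) (lg : T -> 'I_3) (rk : V -> V -> nat)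
  (* Omega is a (consistently ccw-oriented, conforming) triangulation *)
  (Hccw : forall t, ccw_tri pos tv t)
  (Hdir : forall t t' i i', tv t i = tv t' i' ->
            tv t (nxt i) = tv t' (nxt i') -> t = t')
  (Hdisj : forall t t' q, inside_tri pos tv t q -> inside_tri pos tv t' q -> t = t')
  (* designated unique longest edge, ties broken consistently by rank rk *)
  (Hrk_sym : forall a b, rk a b = rk b a)
  (Hrk_inj : forall a b c d, rk a b = rk c d -> same_edge a b c d)
  (Hrk_len : forall a b c d,
      (len2 (pos a) (pos b) < len2 (pos c) (pos d))%R -> rk a b < rk c d)
  (Hlg : forall t i, i != lg t ->
      rk (tv t i) (tv t (nxt i)) < rk (tv t (lg t)) (tv t (nxt (lg t))))
  (* R = terminal-edge region of edge {u,w}; seed triangle in R *)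
  (u w : V) (seed : T) (i0 : 'I_3)
  (Hseed : lepp_ends tv lg seed u w)
  (* v_init = tv seed i0: start of the ccw run of frontier-edges of seed
     (arbitrary if seed has no frontier-edge or only frontier-edges) *)
  (Hi0 : (exists j, frontier tv lg seed j) -> (exists j, ~~ frontier tv lg seed j) ->
         frontier tv lg seed i0 && ~~ frontier tv lg seed (prv i0)) :
  forall (t : T) (k : nat),
    lepp_ends tv lg t u w ->
    (* the procedure has not stopped before step k *)
    (forall j, 0 < j < k -> walk tv lg (seed, i0) j != (seed, i0)) ->
    visits tv lg (seed, i0) t k <= 3.
Proof.
move=> t k _ Hstop.
have Hinj := tv_inj_ccw Hccw.
have Sinj := step_inj Hinj Hdir.
set s0 := (seed, i0).
have iter_inj : forall n, injective (iter n (step tv lg)).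
  by elim=> [|n IH] x y //= /Sinj /IH.
have dist : forall a b, a < b < k -> walk tv lg s0 a.+1 != walk tv lg s0 b.+1.
  move=> a b /andP[ab bk]; apply/eqP => E.
  have E' : walk tv lg s0 (a.+1 + (b - a)) = walk tv lg s0 a.+1.
    by rewrite addSn subnKC ?E // ltnW.
  move: E'; rewrite /walk iterD => /iter_inj E2.
  have : 0 < b - a < k by rewrite subn_gt0 ab /=; apply: leq_ltn_trans (leq_subr _ _) bk.
  by move/Hstop; rewrite /walk E2 eqxx.
rewrite /visits big_mkord.
apply: (@leq_trans (\sum_(j < k) ((walk tv lg s0 j.+1).1 == t))).
  by apply: leq_sum => j _; case: (crosses _).
rewrite (eq_bigr (fun j : 'I_k => if (walk tv lg s0 j.+1).1 == t then 1 else 0));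
  last by move=> j _; case: (_ == t).
rewrite -big_mkcond sum1_card.
set A := [pred j : 'I_k | (walk tv lg s0 j.+1).1 == t].
rewrite -(@card_in_imset _ _ (fun j : 'I_k => (walk tv lg s0 j.+1).2) A).
  by apply: leq_trans (max_card _) _; rewrite card_ord.
move=> a b; rewrite !inE => /eqP Ha /eqP Hb E.
have Eab : walk tv lg s0 a.+1 = walk tv lg s0 b.+1.
  by move: Ha Hb E; case: (walk _ _ _ a.+1) => ? ?; case: (walk _ _ _ b.+1) => ? ? /= -> -> ->.
apply: val_inj => /=.
case: (ltngtP a b) => // H.
  by move: (dist a b); rewrite H ltn_ord Eab eqxx => /(_ isT).
by move: (dist b a); rewrite H ltn_ord Eab eqxx => /(_ isT).
Qed.
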